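(* Let $m\ge 3$ items be placed independently, each uniformly at random into one of three boxes, and let $a,b,c$ be the random numbers of items in the three boxes. Then $\mathbb{E}[\min\{a,b,c\}]\ge \frac{2}{27}m$. *)

(* Defs.v *)
(* Discrete uniform probability over all assignments
   f : 'I_m -> 'I_3 of m items to 3 boxes (each of the 3^m assignments
   equally likely, i.e. items placed independently and uniformly). *)
From mathcomp Require Import all_boot all_order all_algebra.
Set Implicit Arguments. Unset Strict Implicit. Unset Printing Implicit Defensive.
Import Order.TTheory GRing.Theory Num.Theory.

Definition load (m : nat) (f : {ffun 'I_m -> 'I_3}) (i : 'I_3) : nat :=
  #|[set j | f j == i]|.

Definition minload (m : nat) (f : {ffun 'I_m -> 'I_3}) : nat :=
  minn (load f (inord 0)) (minn (load f (inord 1)) (load f (inord 2))).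

Definition expected_min (m : nat) : rat :=
  ((\sum_(f : {ffun 'I_m -> 'I_3}) (minload f)%:R) / (3 ^ m)%:R)%R.

(* Main.v *)
Require Import Defs.
From mathcomp Require Import all_boot all_order all_algebra.
From mathcomp Require Import zify ring.
Import Order.TTheory GRing.Theory Num.Theory.
Lemma pw1 (a b c : nat) : (4*(a*b*c) <= (a+b+c-1)^2 * a)%N.
Proof.
case: a => [|a]; first by rewrite !mul0n.
have e : (a.+1 + b + c - 1 = a + b + c)%N by lia.
rewrite e.
have h1 : (4*(b*c) <= (b+c)^2)%N by have := (nat_Cauchy b c).1; rewrite sqrnD; lia.
have h2 : ((b+c)^2 <= (a+b+c)^2)%N by rewrite leq_exp2r // -addnA leq_addl.
have h3 := leq_mul (leq_trans h1 h2) (leqnn a.+1).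
have -> : (4 * (a.+1 * b * c) = 4 * (b * c) * a.+1)%N by ring.
exact h3.
Qed.
Lemma pw (a b c : nat) : (4*(a*b*c) <= (a+b+c-1)^2 * minn a (minn b c))%N.
Proof.
case: (leqP a (minn b c)) => h.
  by apply: pw1.

case: (leqP b c) => h'.

  have := pw1 b a c.
  have -> : (b + a + c = a + b + c)%N by ring.
  have -> : (b * a * c = a * b * c)%N by ring.
  done.

have := pw1 c a b.
have -> : (c + a + b = a + b + c)%N by ring.
have -> : (c * a * b = a * b * c)%N by ring.
done.
Qed.
Lemma loadE m (f : {ffun 'I_m -> 'I_3}) i : load f i = \sum_j (f j == i : nat).
Proof. rewrite /load -sum1_card big_mkcond /=; apply: eq_bigr => j _; rewrite inE; by case: eqP. Qed.
Lemma prod_loads m (f : {ffun 'I_m -> 'I_3}) (i0 i1 i2 : 'I_3) : (load f i0 * load f i1 * load f i2 = \sum_j0 \sum_j1 \sum_j2 ((f j0==i0) * (f j1==i1) * (f j2==i2)))%N.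
Proof.
rewrite !loadE -mulnA big_distrl /=; apply: eq_bigr => j0 _.
rewrite big_distrl /= big_distrr /=; apply: eq_bigr => j1 _.
rewrite big_distrr /= big_distrr /=; apply: eq_bigr => j2 _. by rewrite mulnA.
Qed.
Lemma prod_if1 (m : nat) (j : 'I_m) (e : 'I_m -> nat) :
  (\prod_x (if x == j then e x else 1) = e j)%N.
Proof. by rewrite -big_mkcond big_pred1_eq. Qed.

Lemma eqmul0 (x a b : 'I_3) : a != b -> ((x == a) * (x == b) = 0)%N.
Proof. by move=> h; case: (eqVneq x a) => [->|]; rewrite ?(negbTE h) ?muln0. Qed.

Lemma count_f m (j0 j1 j2 : 'I_m) (i0 i1 i2 : 'I_3)
  (h01 : i0 != i1) (h02 : i0 != i2) (h12 : i1 != i2) :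
  (\sum_(f : {ffun 'I_m -> 'I_3}) ((f j0==i0)*(f j1==i1)*(f j2==i2)) =
   [&& j0!=j1, j0!=j2 & j1!=j2] * 3^(m-3))%N.
Proof.
have [e01|n01] := eqVneq j0 j1.
  rewrite /= mul0n big1 // => f _; subst j1.
  by rewrite eqmul0.
have [e02|n02] := eqVneq j0 j2.
  rewrite /= mul0n big1 // => f _; subst j2.
  by rewrite mulnAC eqmul0.
have [e12|n12] := eqVneq j1 j2.
  rewrite /= mul0n big1 // => f _; subst j2.
  by rewrite -mulnA eqmul0 // muln0.
rewrite /= mul1n.
pose P (x : 'I_m) (y : 'I_3) : nat := ((if x == j0 then (y == i0 : nat) else 1) *
  (if x == j1 then (y == i1 : nat) else 1) * (if x == j2 then (y == i2 : nat) else 1))%N.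
transitivity (\sum_(f : {ffun 'I_m -> 'I_3}) \prod_x P x (f x)).
  apply: eq_bigr => f _; rewrite /P !big_split /= !prod_if1.
  done.
rewrite -bigA_distr_bigA /=.
pose S := j0 |: (j1 |: [set j2]).
transitivity (\prod_(x in ~: S) 3)%N.
  rewrite [RHS]big_mkcond; apply: eq_bigr => x _.
  rewrite /P !inE.
  have n10 : j1 != j0 by rewrite eq_sym.
  have n20 : j2 != j0 by rewrite eq_sym.
  have n21 : j2 != j1 by rewrite eq_sym.
  have [E|nx0] := eqVneq x j0.
    rewrite E (negbTE n01) (negbTE n02) /=.
    rewrite (bigD1 i0) //= eqxx big1 // => y /negbTE ->; done.
  have [E|nx1] := eqVneq x j1.
    rewrite E (negbTE n12) /=.
    rewrite (bigD1 i1) //= eqxx big1 // => y /negbTE ->; done.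
  have [E|nx2] := eqVneq x j2.
    rewrite /=.
    rewrite (bigD1 i2) //= eqxx big1 // => y /negbTE ->; done.
  by rewrite /= sum_nat_const card_ord.
rewrite prod_nat_const.
have := cardsC S; rewrite card_ord.
have -> : #|S| = 3.
  rewrite /S !cardsU1 cards1 !inE (negbTE n01) (negbTE n02) (negbTE n12) //.
move=> H; have -> : #|~: S| = (m - 3)%N by lia.
done.
Qed.
Lemma sum_in (T : finType) (A : {set T}) : (\sum_x (x \in A : nat) = #|A|)%N.
Proof. rewrite -sum1_card [RHS]big_mkcond /=; apply: eq_bigr => x _; by case: (x \in A). Qed.

Lemma cnt_triples m : (\sum_(j0 : 'I_m) \sum_(j1 : 'I_m) \sum_(j2 : 'I_m)
   ([&& j0!=j1, j0!=j2 & j1!=j2] : nat) = m * (m-1) * (m-2))%N.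
Proof.
transitivity (\sum_(j0 : 'I_m) ((m - 1) * (m - 2)))%N; last first.
  by rewrite sum_nat_const card_ord mulnA.
apply: eq_bigr => j0 _.
transitivity (\sum_(j1 : 'I_m) ((j0 != j1) * (m - 2)))%N.
  apply: eq_bigr => j1 _.
  have [E|n01] := eqVneq j0 j1.
    by rewrite /= big1_eq.
  rewrite /= mul1n.
  transitivity (\sum_x (x \in ~: (j0 |: [set j1])) : nat)%N.
    by apply: eq_bigr => x _; rewrite !inE negb_or !(eq_sym x).
  rewrite sum_in.
  have := cardsC (j0 |: [set j1]); rewrite card_ord cardsU1 cards1 inE n01 /=.
  lia.
rewrite -big_distrl /=.
transitivity ((\sum_x ((x \in ~: [set j0]) : nat)) * (m - 2))%N.
  by congr (_ * _); apply: eq_bigr => x _; rewrite !inE eq_sym.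
rewrite sum_in.
have := cardsC [set j0]; rewrite card_ord cards1.
lia.
Qed.

Lemma t3 (x : 'I_3) : ((x == inord 0) + (x == inord 1) + (x == inord 2) = 1)%N.
Proof. case: x => [[|[|[|n]]] hn] //; by rewrite -!val_eqE /= !inordK. Qed.

Lemma sum_loads m (f : {ffun 'I_m -> 'I_3}) :
  (load f (inord 0) + load f (inord 1) + load f (inord 2) = m)%N.
Proof.
rewrite !loadE -!big_split /=.
rewrite (eq_bigr (fun _ => 1%N)) ?sum_nat_const ?card_ord ?muln1 // => j _.
exact: t3.
Qed.

Lemma T_eq m : (\sum_(f : {ffun 'I_m -> 'I_3})
   (load f (inord 0) * load f (inord 1) * load f (inord 2)) =
   m * (m-1) * (m-2) * 3^(m-3))%N.
Proof.
have h01 : (inord 0 : 'I_3) != inord 1 by rewrite -val_eqE /= !inordK.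
have h02 : (inord 0 : 'I_3) != inord 2 by rewrite -val_eqE /= !inordK.
have h12 : (inord 1 : 'I_3) != inord 2 by rewrite -val_eqE /= !inordK.
rewrite -cnt_triples.
under eq_bigr do rewrite prod_loads.
rewrite exchange_big big_distrl /=; apply: eq_bigr => j0 _.
rewrite exchange_big big_distrl /=; apply: eq_bigr => j1 _.
rewrite exchange_big big_distrl /=; apply: eq_bigr => j2 _.
exact: count_f.
Qed.

Theorem lemma3 (m : nat) (hm : (3 <= m)%N) :
  ((2%:R / 27%:R) * m%:R <= expected_min m :> rat)%R.
Proof.
set S := (\sum_(f : {ffun 'I_m -> 'I_3}) minload f)%N.
have key : (2 * m * 3^(m-3) <= S)%N.
  have h1 : (4 * (m * (m-1) * (m-2) * 3^(m-3)) <= (m-1)^2 * S)%N.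
    rewrite -T_eq big_distrr big_distrr /=; apply: leq_sum => f _.
    have := pw (load f (inord 0)) (load f (inord 1)) (load f (inord 2)).
    by rewrite sum_loads.
  have h2 : ((m-1)^2 * (2 * m * 3^(m-3)) <= 4 * (m * (m-1) * (m-2) * 3^(m-3)))%N.
    have : ((m-1)^2 * (2 * m) <= 4 * (m * (m-1) * (m-2)))%N by nia.
    move=> h; have := leq_mul h (leqnn (3^(m-3))).
    by rewrite -!mulnA.
  have := leq_trans h2 h1.
  by rewrite leq_pmul2l // expn_gt0; apply/orP; left; lia.
rewrite /expected_min -natr_sum -/S.
rewrite ler_pdivlMr ?ltr0n ?expn_gt0 //.
have -> : (3 ^ m = 3 ^ (m-3) * 27)%N by rewrite -{1}(subnKC hm) expnD mulnC.
have -> : ((2%:R / 27%:R) * m%:R * (3 ^ (m - 3) * 27)%:R = (2 * m * 3 ^ (m - 3))%:R :> rat)%R.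
  by rewrite !natrM; field.

by rewrite ler_nat.
Qed.
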